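(* Let $A=kQ/I$ be a toupie algebra over a field $k$ of characteristic zero. The set $U=C_1\cup C_2\cup C_3\cup C_4$ is a basis of $\ker D_1$, where $C_1=\{\alpha^i_j\|\alpha^i_j: \alpha^{(i)}\text{ a branch containing monomial relations, } \alpha^i_j \text{ an arrow of it}\}$; $C_2=\{\alpha^{(u)}\|c: \alpha^{(u)}\in Z,\ c\in{}_0\mathcal{B}_\omega\}$; $C_3=\{\alpha^i_j\|\alpha^i_j-\alpha^i_0\|\alpha^i_0: j\ne0,\ \alpha^{(i)}\text{ of length }>1\text{ containing no monomial relation}\}$; $C_4=\{\sum_{\alpha^{(i)}\in Q_\rho^k}\alpha^i_0\|\alpha^i_0: k=1,\dots,r\}$.
   Context: A finite quiver $Q$ is a toupie quiver if it has a unique source $0$, a unique sink $\omega$, and every other vertex is the source of exactly one arrow and the target of exactly one arrow. Paths are composed left to right. A branch is a path from $0$ to $\omega$; the arrows of a branch $\alpha^{(i)}$ are $\alpha^i_0,\alpha^i_1,\dots$ in order, $\alpha^i_0$ starting at $0$. A toupie algebra is $A=kQ/I$ with $Q$ toupie and $I$ an admissible ideal generated by monomial relations (paths inside one branch) and non-monomial relations (linear combinations of branches). $Z$ is the set of arrows from $0$ to $\omega$. The non-monomial relations have coefficient matrix in reduced row echelon form, $\rho_i=\alpha^{(k_i)}+\sum_{j>k_i}b_{ij}\alpha^{(j)}$; $R$ is a minimal generating set of $I$ formed by these $\rho_i$ and monomial relations. $E=kQ_0$, $e_x$ trivial path at $x$, ${}_0\mathcal{B}_\omega$ the set of classes of branches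 containing no monomial relation and different from all $\alpha^{(k_i)}$ (a basis of $e_0Ae_\omega$). $Q_\rho$ is the graph whose vertices are branches of length $\ge2$ containing no monomial relation, with an edge between two of them if some $\rho_i$ involves both; $Q_\rho^1,\dots,Q_\rho^r$ are its connected components. For an arrow $\gamma$ and $h\in e_{s(\gamma)}Ae_{t(\gamma)}$, $\gamma\|h$ is the $E$-bimodule map $kQ_1\to A$ sending $\gamma$ to $h$ and other arrows to $0$. $D_1:\mathrm{Hom}_{E^e}(kQ_1,A)\to\mathrm{Hom}_{E^e}(kR,A)$ is $D_1(f)(r)=\sum r^{(1)}f(r^{(2)})r^{(3)}$, the sum over all factorizations $r^{(1)}r^{(2)}r^{(3)}$ of the paths occurring in $r$ with $r^{(2)}$ an arrow, extended linearly. *)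

(* Defs.v *)
From mathcomp Require Import all_boot all_order all_algebra.
Set Implicit Arguments.
Unset Strict Implicit.
Unset Printing Implicit Defensive.
Import GRing.Theory.

(* The toupie quiver.  A (connected) toupie quiver is a family of n >= 1     *)
(* branches from the source 0 to the sink w; branch i has len i >= 1 arrows  *)
(* alpha^i_0, ..., alpha^i_(len i - 1).  Vertex number j (0 <= j <= len i)   *)
(* of branch i is 0 if j = 0, w if j = len i, and an interior vertex         *)
(* (private to branch i) otherwise.                                           *)
Section Quiver.
Variables (n : nat) (len : 'I_n -> nat).

Definition arrT (i : 'I_n) := 'I_(len i).
Definition Arrow := {i : 'I_n & arrT i}.

(* (i,(a,b)) with a < b <= len i : the path alpha^i_a ... alpha^i_(b-1) of
   branch i.  These are exactly the nontrivial paths of Q; entries with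
   a >= b are junk and never used (see [valid]). *)
Definition segT (i : 'I_n) := ('I_(len i).+1 * 'I_(len i).+1)%type.
Definition Seg := {i : 'I_n & segT i}.

Definition seg_a (s : Seg) : nat := val (tagged s).1.
Definition seg_b (s : Seg) : nat := val (tagged s).2.
Definition valid (s : Seg) : bool := seg_a s < seg_b s.
Definition slen (s : Seg) : nat := (seg_b s - seg_a s)%N.

Definition mkseg (i : 'I_n) (a b : nat) : Seg :=
  @Tagged 'I_n i segT (inord a, inord b).

Inductive vertex := Vsource | Vsink | Vint of 'I_n & nat.

Definition vert (i : 'I_n) (j : nat) : vertex :=
  if j == 0%N then Vsource else if j == len i then Vsink else Vint i j.

Definition src (s : Seg) : vertex := vert (tag s) (seg_a s).
Definition tgt (s : Seg) : vertex := vert (tag s) (seg_b s).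

Definition branch (i : 'I_n) : Seg := mkseg i 0 (len i).
Definition arrowseg (g : Arrow) : Seg :=
  mkseg (tag g) (val (tagged g)) (val (tagged g)).+1.

Definition segmul (p q : Seg) : option Seg :=
  if [&& tag p == tag q, seg_b p == seg_a q, valid p & valid q]
  then Some (mkseg (tag p) (seg_a p) (seg_b q)) else None.

Definition inZ (g : Arrow) : bool := len (tag g) == 1%N.

End Quiver.

(* The path algebra.  Since every cochain value and every relation lives in  *)
(* some e_x kQ e_y with x <> y, we only need the span of the nontrivial      *)
(* paths (the arrow ideal R_Q of kQ), with kQ-multiplication; multiplying by *)
(* a trivial path e_x is either the identity or zero, and is encoded by the  *)
(* option type below (None = multiplication by 1).                           *)
Section PathAlgebra.
Local Open Scope ring_scope.
Variables (k : fieldType) (n : nat) (len : 'I_n -> nat).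

Definition kQ := {ffun Seg len -> k^o}.

Definition pv (s : Seg len) : kQ := [ffun t => (t == s)%:R].

Definition pmul (x y : kQ) : kQ :=
  \sum_(p : Seg len) \sum_(q : Seg len)
     (x p * y q) *: oapp pv 0 (segmul p q).

Definition lmulo (u : option (Seg len)) (h : kQ) : kQ :=
  if u is Some s then pmul (pv s) h else h.
Definition rmulo (h : kQ) (v : option (Seg len)) : kQ :=
  if v is Some s then pmul h (pv s) else h.

Variables (mono : {set Seg len}) (p : nat) (B : 'M[k]_(p, n)).

Definition rho (l : 'I_p) : kQ := \sum_(j : 'I_n) B l j *: pv (branch len j).

Definition RelIdx := (Seg len + 'I_p)%type.
Definition inR (r : RelIdx) : bool :=
  match r with inl m => m \in mono | inr _ => true end.
Definition relvec (r : RelIdx) : kQ :=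
  match r with inl m => pv m | inr l => rho l end.

Definition GenIdx := (option (Seg len) * RelIdx * option (Seg len))%type.
Definition gen (g : GenIdx) : kQ := lmulo g.1.1 (rmulo (relvec g.1.2) g.2).

Definition inIdeal (P : pred RelIdx) (h : kQ) : Prop :=
  exists c : {ffun GenIdx -> k},
    h = \sum_(g : GenIdx | P g.1.2) c g *: gen g.

Definition inI (h : kQ) : Prop := inIdeal inR h.

(* I is admissible: I is contained in R_Q^2 (the other inclusion R_Q^m <= I
   is automatic since Q is finite and acyclic, so R_Q^m = 0 for m large). *)
Definition admissible : Prop :=
  forall h, inI h -> forall s, h s != 0 -> (2 <= slen s)%N.

Definition minimal_gen : Prop :=
  forall r, inR r -> ~ inIdeal (fun r' => inR r' && (r' != r)) (relvec r).

Definition is_rref (piv : 'I_p -> 'I_n) : Prop :=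
  [/\ forall l l' : 'I_p, (l < l')%N -> (piv l < piv l')%N,
      forall l, B l (piv l) = 1,
      forall l (j : 'I_n), (j < piv l)%N -> B l j = 0
    & forall l l', l' != l -> B l' (piv l) = 0].

Definition hasMono (i : 'I_n) : bool := [exists m in mono, tag m == i].

(* Cochains: Hom_{E^e}(kQ_1, A) = (+)_gamma e_{s gamma} A e_{t gamma}.      *)
(* A cochain is represented by f : Arrow -> kQ with f gamma a combination of *)
(* paths parallel to gamma; two representatives are equal in A iff their    *)
(* difference lies in I.                                                     *)
Definition is_cochain (f : Arrow len -> kQ) : Prop :=
  forall g s, f g s != 0 ->
    [/\ valid s, src s = src (arrowseg g) & tgt s = tgt (arrowseg g)].

Definition dpath (f : Arrow len -> kQ) (s : Seg len) : kQ :=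
  \sum_(j : 'I_(len (tag s)) | (seg_a s <= j < seg_b s)%N)
     lmulo (if (seg_a s < j)%N then Some (mkseg len (tag s) (seg_a s) j) else None)
       (rmulo (f (@Tagged 'I_n (tag s) (arrT len) j))
              (if (j.+1 < seg_b s)%N then Some (mkseg len (tag s) j.+1 (seg_b s))
               else None)).

Definition D1 (f : Arrow len -> kQ) (r : RelIdx) : kQ :=
  match r with
  | inl m => dpath f m
  | inr l => \sum_(j : 'I_n) B l j *: dpath f (branch len j)
  end.

Definition inKerD1 (f : Arrow len -> kQ) : Prop :=
  is_cochain f /\ forall r, inR r -> inI (D1 f r).

Variable piv : 'I_p -> 'I_n.

Definition inB0w (j : 'I_n) : bool := ~~ hasMono j && [forall l, piv l != j].

Definition qv (j : 'I_n) : bool := (1 < len j)%N && ~~ hasMono j.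
Definition qedge : rel 'I_n :=
  fun i j => [&& qv i, qv j & [exists l, (B l i != 0) && (B l j != 0)]].
Definition comps : {set {set 'I_n}} :=
  [set [set j | connect qedge i j] | i in [set i | qv i]].

Definition arrcoch (g : Arrow len) (h : kQ) : Arrow len -> kQ :=
  fun d => if d == g then h else 0.
Definition firstarr (K : pred 'I_n) : Arrow len -> kQ :=
  fun d => if (tag d \in K) && (val (tagged d) == 0%N)
           then pv (arrowseg d) else 0.

Definition C1idx := {g : Arrow len | hasMono (tag g)}.
Definition C2idx := ({g : Arrow len | inZ g} * {j : 'I_n | inB0w j})%type.
Definition C3idx := {g : Arrow len |
  [&& val (tagged g) != 0%N, (1 < len (tag g))%N & ~~ hasMono (tag g)]}.
Definition C4idx := {K : {set 'I_n} | K \in comps}.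
Definition UIdx := (C1idx + C2idx + C3idx + C4idx)%type.

Definition U (u : UIdx) : Arrow len -> kQ :=
  match u with
  | inl (inl (inl x)) => arrcoch (val x) (pv (arrowseg (val x)))
  | inl (inl (inr x)) => arrcoch (val x.1) (pv (branch len (val x.2)))
  | inl (inr x) => fun d => arrcoch (val x) (pv (arrowseg (val x))) d
                          - firstarr (pred1 (tag (val x))) d
  | inr K => firstarr (mem (val K))
  end.

End PathAlgebra.

(* Main.v *)
Require Import Defs.
From mathcomp Require Import all_boot all_order all_algebra.
From mathcomp Require Import zify.
Set Implicit Arguments. Unset Strict Implicit. Unset Printing Implicit Defensive.
Import GRing.Theory.
Local Open Scope ring_scope.

Section S.
Variables (k : fieldType) (n : nat) (len : 'I_n -> nat).
Hypothesis hlen : forall i, (0 < len i)%N.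

Lemma seg_b_le (s : Seg len) : (seg_b s <= len (tag s))%N.
Proof. by case: s => i [x y]; rewrite /seg_b /= -ltnS. Qed.

Lemma seg_a_le (s : Seg len) : (seg_a s <= len (tag s))%N.
Proof. by case: s => i [x y]; rewrite /seg_a /= -ltnS. Qed.

Lemma mkseg_a i a b : (a <= len i)%N -> seg_a (mkseg len i a b) = a.
Proof. by move=> h; rewrite /seg_a /mkseg /= inordK. Qed.

Lemma mkseg_b i a b : (b <= len i)%N -> seg_b (mkseg len i a b) = b.
Proof. by move=> h; rewrite /seg_b /mkseg /= inordK. Qed.

Lemma segE (s : Seg len) : s = mkseg len (tag s) (seg_a s) (seg_b s).
Proof. by case: s => i [x y]; rewrite /mkseg /seg_a /seg_b /= !inord_val. Qed.

Lemma mkseg_inj i a b i' a' b' : (a <= len i)%N -> (b <= len i)%N ->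
  (a' <= len i')%N -> (b' <= len i')%N ->
  mkseg len i a b = mkseg len i' a' b' -> [/\ i = i', a = a' & b = b'].
Proof.
move=> ha hb ha' hb' e; have ei : i = i' by have := congr1 tag e.
split=> //.
  by have := congr1 (@seg_a n len) e; rewrite !mkseg_a.
by have := congr1 (@seg_b n len) e; rewrite !mkseg_b.
Qed.

Lemma branch_inj : injective (branch len).
Proof. by move=> i j e; have := congr1 tag e. Qed.

Lemma arrowseg_a (g : Arrow len) : seg_a (arrowseg g) = val (tagged g).
Proof. rewrite /arrowseg mkseg_a //; exact: ltnW (ltn_ord (tagged g : 'I_(len (tag g)))). Qed.

Lemma arrowseg_b (g : Arrow len) : seg_b (arrowseg g) = (val (tagged g)).+1.
Proof. rewrite /arrowseg mkseg_b //; exact: (ltn_ord (tagged g : 'I_(len (tag g)))). Qed.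

Lemma arrowseg_tag (g : Arrow len) : tag (arrowseg g) = tag g.
Proof. by []. Qed.

Lemma arrowseg_inj : injective (@arrowseg n len).
Proof.
move=> [i t] [j u] e.
have eij : i = j := congr1 (@tag _ _) e.
subst j.
have := congr1 (@seg_a n len) e; rewrite !arrowseg_a /=.
by move=> /val_inj ->.
Qed.

Lemma pvE (s t : Seg len) : pv k s t = (t == s)%:R.
Proof. by rewrite ffunE. Qed.

Lemma pmul_pvl (s : Seg len) (h : kQ k len) :
  pmul (pv k s) h = \sum_q h q *: oapp (@pv k n len) 0 (segmul s q).
Proof.
rewrite /pmul (bigD1 s) //= [X in _ + X]big1 ?addr0; last first.
  move=> p ps; apply: big1 => q _; by rewrite pvE (negbTE ps) mul0r scale0r.
by apply: eq_bigr => q _; rewrite pvE eqxx mul1r.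
Qed.

Lemma pmul_pvr (s : Seg len) (h : kQ k len) :
  pmul h (pv k s) = \sum_p h p *: oapp (@pv k n len) 0 (segmul p s).
Proof.
rewrite /pmul; apply: eq_bigr => p _.
rewrite (bigD1 s) //= big1 ?addr0; last first.
  by move=> q /negbTE qs; rewrite pvE qs mulr0 scale0r.
by rewrite pvE eqxx mulr1.
Qed.

Lemma pmul_pv (s t : Seg len) : pmul (pv k s) (pv k t) = oapp (@pv k n len) 0 (segmul s t).
Proof.
rewrite pmul_pvl (bigD1 t) //= big1 ?addr0; last first.
  by move=> q qs; rewrite pvE (negbTE qs) scale0r.
by rewrite pvE eqxx scale1r.
Qed.

Lemma pmul0r (h : kQ k len) : pmul 0 h = 0.
Proof. by rewrite /pmul big1 // => p _; rewrite big1 // => q _; rewrite ffunE mul0r scale0r. Qed.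

Lemma pmulr0 (h : kQ k len) : pmul h 0 = 0.
Proof. by rewrite /pmul big1 // => p _; rewrite big1 // => q _; rewrite ffunE mulr0 scale0r. Qed.

Lemma pmulZr (x y : kQ k len) c : pmul x (c *: y) = c *: pmul x y.
Proof.
rewrite /pmul scaler_sumr; apply: eq_bigr => p _; rewrite scaler_sumr.
by apply: eq_bigr => q _; rewrite ffunE scalerA mulrCA.
Qed.

Lemma pmulZl (x y : kQ k len) c : pmul (c *: x) y = c *: pmul x y.
Proof.
rewrite /pmul scaler_sumr; apply: eq_bigr => p _; rewrite scaler_sumr.
by apply: eq_bigr => q _; rewrite ffunE scalerA mulrA.
Qed.

Lemma lmuloZ u (h : kQ k len) c : lmulo u (c *: h) = c *: lmulo u h.
Proof. by case: u => //= s; rewrite pmulZr. Qed.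

Lemma rmuloZ v (h : kQ k len) c : rmulo (c *: h) v = c *: rmulo h v.
Proof. by case: v => //= s; rewrite pmulZl. Qed.

Lemma lmulo0 u : lmulo u (0 : kQ k len) = 0.
Proof. by case: u => //= s; rewrite pmulr0. Qed.

Lemma rmulo0 v : rmulo (0 : kQ k len) v = 0.
Proof. by case: v => //= s; rewrite pmul0r. Qed.

Lemma ext_r i a b c : (a < b)%N -> (b <= c)%N -> (c <= len i)%N ->
  rmulo (pv k (mkseg len i a b)) (if (b < c)%N then Some (mkseg len i b c) else None)
  = pv k (mkseg len i a c).
Proof.
move=> hab hbc hc; case: ltnP => h /=; last by have -> : c = b by apply/eqP; rewrite eqn_leq hbc h.
rewrite pmul_pv /segmul /valid !mkseg_a ?mkseg_b ?eqxx /=; try lia.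
by rewrite hab h.
Qed.

Lemma ext_l i a' a b : (a' <= a)%N -> (a < b)%N -> (b <= len i)%N ->
  lmulo (if (a' < a)%N then Some (mkseg len i a' a) else None) (pv k (mkseg len i a b))
  = pv k (mkseg len i a' b).
Proof.
move=> ha hab hb; case: ltnP => h /=; last by have -> : a' = a by apply/eqP; rewrite eqn_leq ha h.
rewrite pmul_pv /segmul /valid !mkseg_a ?mkseg_b ?eqxx /=; try lia.
by rewrite hab h.
Qed.

Variables (mono : {set Seg len}) (p : nat) (B : 'M[k]_(p, n)).

Lemma inI0 : inI mono B 0.
Proof. by exists 0; rewrite big1 // => g _; rewrite ffunE scale0r. Qed.

Lemma inID x y : inI mono B x -> inI mono B y -> inI mono B (x + y).
Proof.
move=> [c1 ->] [c2 ->]; exists (c1 + c2); rewrite -big_split /=.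
by apply: eq_bigr => g _; rewrite ffunE scalerDl.
Qed.

Lemma inIZ c x : inI mono B x -> inI mono B (c *: x).
Proof.
move=> [c1 ->]; exists [ffun g => c * c1 g]; rewrite scaler_sumr.
by apply: eq_bigr => g _; rewrite ffunE scalerA.
Qed.

Lemma inIN x : inI mono B x -> inI mono B (- x).
Proof. by move=> h; rewrite -scaleN1r; apply: inIZ. Qed.

Lemma inIB x y : inI mono B x -> inI mono B y -> inI mono B (x - y).
Proof. by move=> hx hy; apply: inID => //; apply: inIN. Qed.

Lemma inI_sum (I : finType) (P : pred I) (F : I -> kQ k len) :
  (forall i, P i -> inI mono B (F i)) -> inI mono B (\sum_(i | P i) F i).
Proof.
move=> h; apply: (big_ind (inI mono B)) => //; first exact: inI0.
exact: inID.
Qed.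

Lemma scaleE (c : k) (f : kQ k len) s : (c *: f) s = c * f s.
Proof. by rewrite ffunE. Qed.

Lemma inI_gen (g : GenIdx len p) : inR mono g.1.2 -> inI mono B (gen B g).
Proof.
move=> hg; exists [ffun g' => (g' == g)%:R].
rewrite (bigD1 g) //= big1 ?addr0; first by rewrite ffunE eqxx scale1r.
by move=> g' /andP[_ ne]; rewrite ffunE (negbTE ne) scale0r.
Qed.

Lemma inI_rho l : inI mono B (rho len B l).
Proof. by have := @inI_gen (None, inr l, None) isT; rewrite /gen. Qed.

Lemma inI_mono m : m \in mono -> inI mono B (pv k m).
Proof. by move=> hm; have := @inI_gen (None, inl m, None) hm; rewrite /gen. Qed.

Lemma rho_branch l j : rho len B l (branch len j) = B l j.
Proof.
rewrite /rho sum_ffunE (bigD1 j) //= big1 ?addr0.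
  by rewrite scaleE pvE eqxx mulr1.
by move=> j' ne; rewrite scaleE pvE (inj_eq (@branch_inj)) eq_sym (negbTE ne) mulr0.
Qed.

Lemma vert_eq_int i x i' y : (0 < y < len i')%N -> vert len i x = vert len i' y -> i = i' /\ x = y.
Proof.
move=> /andP[y0 yl]; rewrite {2}/vert.
have -> : (y == 0%N) = false by apply/negbTE; rewrite -lt0n.
have -> : (y == len i') = false by apply/negbTE; rewrite neq_ltn yl.
by rewrite /vert; case: eqP => //; case: eqP => // _ _ [-> ->].
Qed.

Lemma vert_eq_src i x : vert len i x = Vsource n -> x = 0%N.
Proof. by rewrite /vert; case: eqP => //; case: eqP. Qed.

Lemma vert_eq_snk i x : vert len i x = Vsink n -> x = len i.
Proof. by rewrite /vert; case: eqP => //; case: eqP. Qed.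

Lemma vert0 i : vert len i 0 = Vsource n.
Proof. by []. Qed.

Lemma vertl i : vert len i (len i) = Vsink n.
Proof. by rewrite /vert eqxx; case: eqP => // h; have := hlen i; rewrite h. Qed.

Lemma cochain_diag (f : Arrow len -> kQ k len) a : is_cochain f -> (1 < len (tag a))%N ->
  f a = f a (arrowseg a) *: pv k (arrowseg a).
Proof.
move=> hf hl; apply/ffunP => s; rewrite scaleE pvE.
case: (eqVneq s (arrowseg a)) => [->|ne]; first by rewrite mulr1.
rewrite mulr0; apply/eqP; apply: contraR ne => /hf [vs hs ht]; apply/eqP.
move: hs ht; rewrite /src /tgt arrowseg_a arrowseg_b arrowseg_tag.
case: a hl => i t /= hl hs ht.
have tl : (t < len i)%N := ltn_ord t.
have sb := seg_b_le s; have vs' : (seg_a s < seg_b s)%N := vs.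
rewrite (segE s) /arrowseg /=.
have [t0|tpos] := eqVneq (val t) 0%N.
  rewrite t0 vert0 in hs; rewrite t0 in ht.
  have ex := vert_eq_src hs.
  have [ei ey] := vert_eq_int (y:=1) (i':=i) (ltac:(by rewrite /= hl)) ht.
  by rewrite ex ey t0; move: ei => ->.
have [ei ex] := vert_eq_int (i':=i) (y:=val t) (ltac:(by rewrite lt0n tpos tl)) hs.
move: sb; rewrite ei => sb.
have [tl1|tl1] := ltnP (val t).+1 (len i).
  have [_ ey] := vert_eq_int (i':=i) (y:=(val t).+1) (ltac:(by rewrite tl1)) ht.
  by rewrite ex ey.
have e1 : (val t).+1 = len i by apply/eqP; rewrite eqn_leq tl tl1.
rewrite e1 vertl ei in ht; have ey := vert_eq_snk ht.
by rewrite ex ey e1.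
Qed.

Lemma Z_tagged0 (a : Arrow len) : len (tag a) = 1%N -> val (tagged a) = 0%N.
Proof.
move=> hl; have h1 := ltn_ord (tagged a : 'I_(len (tag a))).
have : (val (tagged a) < 1)%N by apply: leq_trans h1 _; rewrite hl.
by rewrite ltnS leqn0 => /eqP.
Qed.

Lemma cochain_Z_supp (f : Arrow len -> kQ k len) a s : is_cochain f -> len (tag a) = 1%N ->
  f a s != 0 -> s = branch len (tag s).
Proof.
move=> hf hl /hf [vs hs ht]; move: hs ht; rewrite /src /tgt arrowseg_a arrowseg_b arrowseg_tag.
rewrite Z_tagged0 // vert0 => hs.
have v1 : vert len (tag a) 1 = Vsink n by rewrite /vert hl.
rewrite v1 => ht.
have ex := vert_eq_src hs; have ey := vert_eq_snk ht.
by rewrite {1}(segE s) ex ey.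
Qed.

Lemma cochain_Z (f : Arrow len -> kQ k len) a : is_cochain f -> len (tag a) = 1%N ->
  f a = \sum_j f a (branch len j) *: pv k (branch len j).
Proof.
move=> hf hl; apply/ffunP => s; rewrite sum_ffunE.
have [z|nz] := eqVneq (f a s) 0.
  rewrite z; symmetry; apply: big1 => j _; rewrite scaleE pvE.
  by have [e|ne] := eqVneq s (branch len j); [rewrite -e z mul0r | rewrite mulr0].
have e := cochain_Z_supp hf hl nz.
rewrite (bigD1 (tag s)) //= big1 ?addr0.
  by rewrite scaleE pvE -e eqxx mulr1.
move=> j ne; rewrite scaleE pvE.
have [e2|ne2] := eqVneq s (branch len j); last by rewrite mulr0.
by move: ne; rewrite e2 /= eqxx.
Qed.

Lemma dpath_diag (f : Arrow len -> kQ k len) (s : Seg len) (lam : 'I_(len (tag s)) -> k) :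
  valid s ->
  (forall t : 'I_(len (tag s)), f (@Tagged 'I_n (tag s) (arrT len) t)
        = lam t *: pv k (arrowseg (@Tagged 'I_n (tag s) (arrT len) t))) ->
  dpath f s = (\sum_(t : 'I_(len (tag s)) | (seg_a s <= t < seg_b s)%N) lam t) *: pv k s.
Proof.
move=> vs hf; rewrite /dpath scaler_suml; apply: eq_bigr => t /andP[ha hb].
rewrite hf rmuloZ lmuloZ; congr (_ *: _).
have sb := seg_b_le s.
rewrite /arrowseg ext_r //.
have -> : mkseg len (tag (@Tagged 'I_n (tag s) (arrT len) t))
   (val (tagged (@Tagged 'I_n (tag s) (arrT len) t))) (seg_b s) = mkseg len (tag s) t (seg_b s) by [].
rewrite (ext_l (i:=tag s) ha hb sb).
by rewrite -segE.
Qed.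

Hypothesis hadm : admissible mono B.

Definition lamf (f : Arrow len -> kQ k len) (a : Arrow len) : k := f a (arrowseg a).
Definition sbf (f : Arrow len -> kQ k len) (j : 'I_n) : k :=
  \sum_(t : 'I_(len j)) lamf f (@Tagged 'I_n j (arrT len) t).

Lemma adm_mono m : m \in mono -> (2 <= slen m)%N.
Proof.
move=> hm; apply: (hadm (inI_mono hm)).
by rewrite pvE eqxx oner_eq0.
Qed.

Lemma B_len l j : B l j != 0 -> (1 < len j)%N.
Proof.
move=> h; have := hadm (inI_rho l) (s := branch len j).
rewrite rho_branch => /(_ h).
by rewrite /slen /branch mkseg_a ?mkseg_b // subn0.
Qed.

Lemma mono_len m : m \in mono -> (1 < len (tag m))%N /\ valid m.
Proof.
move=> hm; have h := adm_mono hm; have sb := seg_b_le m.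
move: h; rewrite /slen /valid => h; split.
  by apply: leq_trans sb; apply: leq_trans h (leq_subr _ _).
by rewrite -subn_gt0; apply: leq_trans h.
Qed.

Lemma dpath_branch f j : is_cochain f -> (1 < len j)%N ->
  dpath f (branch len j) = sbf f j *: pv k (branch len j).
Proof.
move=> hf hl.
rewrite (@dpath_diag f (branch len j) (fun t => lamf f (@Tagged 'I_n j (arrT len) t))).
- congr (_ *: _); apply: eq_bigl => t.
  by rewrite /branch mkseg_a ?mkseg_b // leq0n ltn_ord.
- by rewrite /valid /branch mkseg_a ?mkseg_b // hlen.
- by move=> t; rewrite {1}(cochain_diag (a := @Tagged 'I_n j (arrT len) t) hf hl).
Qed.

Lemma D1_rho f l : is_cochain f ->
  D1 B f (inr l) = \sum_j (B l j * sbf f j) *: pv k (branch len j).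
Proof.
move=> hf; rewrite /D1; apply: eq_bigr => j _.
have [z|nz] := eqVneq (B l j) 0; first by rewrite z mul0r !scale0r.
by rewrite dpath_branch ?(B_len nz) // scalerA.
Qed.

Lemma D1_mono f m : is_cochain f -> m \in mono -> inI mono B (D1 B f (inl m)).
Proof.
move=> hf hm; have [hl vm] := mono_len hm; rewrite /D1.
rewrite (@dpath_diag f m (fun t => lamf f (@Tagged 'I_n (tag m) (arrT len) t))) //.
  by apply: inIZ; apply: inI_mono.
by move=> t; rewrite {1}(cochain_diag (a := @Tagged 'I_n (tag m) (arrT len) t) hf hl).
Qed.

Lemma kerD1 f : is_cochain f ->
  (forall l, inI mono B (\sum_j (B l j * sbf f j) *: pv k (branch len j))) ->
  inKerD1 mono B f.
Proof.
move=> hf hr; split => // -[m|l] hm; first exact: D1_mono.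
by rewrite D1_rho.
Qed.

Lemma segmul_tag (x y s' : Seg len) : segmul x y = Some s' ->
  [/\ tag s' = tag x, tag x = tag y, seg_b x = seg_a y, valid x & valid y].
Proof.
rewrite /segmul; case: ifP => // /and4P[/eqP e1 /eqP e2 e3 e4] [<-].
by split.
Qed.

Lemma gen_mono_shape u m v : exists o : option (Seg len),
  gen B (u, inl m, v) = oapp (@pv k n len) 0 o /\ (forall s', o = Some s' -> tag s' = tag m).
Proof.
have [o1 [e1 t1]] : exists o1 : option (Seg len),
    rmulo (pv k m) v = oapp (@pv k n len) 0 o1 /\ (forall s', o1 = Some s' -> tag s' = tag m).
  case: v => [s|]; last by exists (Some m); split => // s' [<-].
  exists (segmul m s); split; first by rewrite /= pmul_pv.
  by move=> s' /segmul_tag [].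
rewrite /gen /= e1; case: u => [s|]; last by exists o1.
case: o1 e1 t1 => [s1|] e1 t1 /=; last by exists None; rewrite pmulr0.
exists (segmul s s1); split; first by rewrite pmul_pv.
by move=> s' /segmul_tag [-> -> _ _ _]; apply: t1.
Qed.

Lemma rho_rmul l s : rmulo (rho len B l) (Some s) = 0.
Proof.
rewrite /= pmul_pvr; apply: big1 => q _.
case e: (segmul q s) => [s'|] /=; last by rewrite scaler0.
have [_ eqs ebs vq vs] := segmul_tag e.
suff -> : rho len B l q = 0 by rewrite scale0r.
rewrite /rho sum_ffunE; apply: big1 => j _; rewrite scaleE pvE.
case: eqP => [eq|]; last by rewrite mulr0.
exfalso; move: ebs vs; rewrite eq /branch mkseg_b // /valid => <-.
have := seg_b_le s; rewrite -eqs eq /branch /=; lia.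
Qed.

Lemma rho_lmul l s : lmulo (Some s) (rho len B l) = 0.
Proof.
rewrite /= pmul_pvl; apply: big1 => q _.
case e: (segmul s q) => [s'|] /=; last by rewrite scaler0.
have [_ eqs ebs vs vq] := segmul_tag e.
suff -> : rho len B l q = 0 by rewrite scale0r.
rewrite /rho sum_ffunE; apply: big1 => j _; rewrite scaleE pvE.
case: eqP => [eq|]; last by rewrite mulr0.
exfalso; move: ebs vs; rewrite eq /branch mkseg_a // /valid => ->.
by rewrite ltn0.
Qed.

Lemma zero_kQ (s : Seg len) : (0 : kQ k len) s = 0.
Proof. by rewrite ffunE. Qed.
Lemma add_kQ (x y : kQ k len) (s : Seg len) : (x + y) s = x s + y s.
Proof. by rewrite ffunE. Qed.
Lemma opp_kQ (x : kQ k len) (s : Seg len) : (- x) s = - x s.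
Proof. by rewrite ffunE. Qed.
Lemma sub_kQ (x y : kQ k len) (s : Seg len) : (x - y) s = x s - y s.
Proof. by rewrite add_kQ opp_kQ. Qed.

Lemma gen_rhoE u l v : gen B (u, inr l, v) = lmulo u (rmulo (rho len B l) v).
Proof. by []. Qed.

Lemma gen_rho0 l : gen B (None, inr l, None) = rho len B l.
Proof. by []. Qed.

Lemma gen_rho_r u l (s : Seg len) : gen B (u, inr l, Some s) = 0.
Proof. by rewrite gen_rhoE rho_rmul lmulo0. Qed.

Lemma gen_rho_l l (s : Seg len) : gen B (Some s, inr l, None) = 0.
Proof. by rewrite gen_rhoE; exact: rho_lmul. Qed.

Lemma ideal_branch h : inI mono B h -> exists d : 'I_p -> k,
  forall j, ~~ hasMono mono j -> h (branch len j) = \sum_l d l * B l j.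
Proof.
move=> [c ->]; apply: (big_ind (fun h : kQ k len => exists d : 'I_p -> k,
  forall j, ~~ hasMono mono j -> h (branch len j) = \sum_l d l * B l j)).
- exists (fun _ => 0) => j _; rewrite zero_kQ big1 // => l _; exact: mul0r.
- move=> x y [d1 h1] [d2 h2]; exists (fun l => d1 l + d2 l) => j hj.
  by rewrite add_kQ h1 // h2 // -big_split; apply: eq_bigr => l _; rewrite mulrDl.
move=> [[u [m|l]] v] hr.
  exists (fun _ => 0) => j hj; rewrite big1 ?scaleE; last by move=> l _; rewrite mul0r.
  have [o [-> ho]] := gen_mono_shape u m v.
  case: o ho => [s'|] ho /=; last by rewrite zero_kQ mulr0.
  rewrite pvE; case: eqP => [e|]; last by rewrite mulr0.
  exfalso; move/negP: hj; apply; apply/existsP; exists m; rewrite /= in hr; rewrite hr /=.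
  by rewrite -(ho s') // -e.
have [z|nz] : (u == None) && (v == None) \/ ~~ ((u == None) && (v == None)).
  by case: ((u == None) && (v == None)); [left|right].
  case/andP: z => /eqP -> /eqP ->.
  exists (fun l' => c (None, inr l, None) * (l' == l)%:R) => j hj.
  rewrite scaleE gen_rho0 rho_branch (bigD1 l) //= big1 ?addr0.
    by rewrite eqxx mulr1.
  by move=> l' ne; rewrite (negbTE ne) mulr0 mul0r.
exists (fun _ => 0) => j hj; rewrite big1 ?scaleE; last by move=> l' _; rewrite mul0r.
suff -> : gen B (u, inr l, v) = 0 by rewrite zero_kQ mulr0.
clear hr; case: v nz => [s|]; first by rewrite gen_rho_r.
by case: u => [s|] //; rewrite gen_rho_l.
Qed.

Lemma inI_branch_mono j : hasMono mono j -> inI mono B (pv k (branch len j)).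
Proof.
case/existsP => m /andP[hm /eqP etag].
have [hl vm] := mono_len hm.
have sb := seg_b_le m; rewrite etag in sb.
have em : pv k m = pv k (mkseg len j (seg_a m) (seg_b m)).
  by rewrite {1}(segE m) etag.
have := @inI_gen ((if (0 < seg_a m)%N then Some (mkseg len j 0 (seg_a m)) else None),
   inl m, (if (seg_b m < len j)%N then Some (mkseg len j (seg_b m) (len j)) else None)) hm.
have -> : forall u v, gen B (u, inl m, v) = lmulo u (rmulo (pv k m) v) by [].
rewrite em (ext_r (i:=j) vm sb (leqnn _)).
by rewrite (ext_l (i:=j) (leq0n _) (leq_trans vm sb) (leqnn _)).
Qed.

Lemma qedge_sym : symmetric (qedge mono B).
Proof.
move=> i j; rewrite /qedge; apply/idP/idP.
  case/and3P => hi hj /existsP[l /andP[a b]]; rewrite hi hj /=.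
  by apply/existsP; exists l; rewrite a b.
case/and3P => hi hj /existsP[l /andP[a b]]; rewrite hi hj /=.
by apply/existsP; exists l; rewrite a b.
Qed.

Lemma csym : connect_sym (qedge mono B).
Proof. exact: sym_connect_sym qedge_sym. Qed.

Lemma connect_qv i j : connect (qedge mono B) i j -> i != j -> qv mono i.
Proof.
case/connectP => -[|y q] /= hp ->; first by rewrite eqxx.
by case/andP: hp => /and3P[].
Qed.

Lemma comp_qv K j : K \in comps mono B -> j \in K -> qv mono j.
Proof.
case/imsetP => i; rewrite inE => hi ->; rewrite inE => c.
have [e|ne] := eqVneq j i; first by rewrite e.
by apply: (connect_qv (i:=j) (j:=i)) => //; rewrite csym.
Qed.

Lemma comp_closed K j j' : K \in comps mono B -> j \in K ->
  connect (qedge mono B) j j' -> j' \in K.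
Proof.
case/imsetP => i _ ->; rewrite !inE => c1 c2; exact: connect_trans c1 c2.
Qed.

Lemma comp_uniq K1 K2 j : K1 \in comps mono B -> K2 \in comps mono B ->
  j \in K1 -> j \in K2 -> K1 = K2.
Proof.
move=> h1 h2 j1 j2; apply/setP => x; apply/idP/idP => hx.
  apply: (comp_closed h2 j2); have := h1; case/imsetP => i _ e1; move: j1 hx; rewrite e1 !inE => c1 c2.
  by apply: connect_trans c2; rewrite csym.
apply: (comp_closed h1 j1); have := h2; case/imsetP => i _ e2; move: j2 hx; rewrite e2 !inE => c1 c2.
by apply: connect_trans c2; rewrite csym.
Qed.

Definition compof (j : 'I_n) : {set 'I_n} := [set x | connect (qedge mono B) j x].

Lemma compof_in j : qv mono j -> compof j \in comps mono B.
Proof. by move=> hj; apply/imsetP; exists j; rewrite ?inE. Qed.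

Lemma compof_self j : j \in compof j.
Proof. by rewrite inE connect0. Qed.

Lemma connect_const (phi : 'I_n -> k) i j :
  (forall x y, qedge mono B x y -> phi x = phi y) ->
  connect (qedge mono B) i j -> phi i = phi j.
Proof.
move=> h /connectP[q hp ->]; elim: q i hp => [|y q IH] i //= /andP[e hp].
by rewrite (h _ _ e) (IH y hp).
Qed.

Variable piv : 'I_p -> 'I_n.
Hypothesis hrref : is_rref B piv.
Hypothesis hrho : forall (l : 'I_p) (j : 'I_n), B l j != 0 -> ~~ hasMono mono j.

Lemma sumU_split (F : UIdx mono B piv -> kQ k len) :
  \sum_u F u = \sum_(x : C1idx mono) F (inl (inl (inl x)))
             + \sum_(x : C2idx mono piv) F (inl (inl (inr x)))
             + \sum_(x : C3idx mono) F (inl (inr x))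
             + \sum_(x : C4idx mono B) F (inr x).
Proof. by rewrite !big_sumType. Qed.

Lemma arrcochE (a : Arrow len) (h : kQ k len) g : arrcoch a h g = if g == a then h else 0.
Proof. by []. Qed.
Lemma firstarrE (K : pred 'I_n) (g : Arrow len) :
  firstarr k K g = if (tag g \in K) && (val (tagged g) == 0%N) then pv k (arrowseg g) else 0.
Proof. by []. Qed.

Lemma hasMono_len j : hasMono mono j -> (1 < len j)%N.
Proof. by case/existsP => m /andP[hm /eqP <-]; case: (mono_len hm). Qed.

Lemma qv_len j : qv mono j -> (1 < len j)%N.
Proof. by case/andP. Qed.

Lemma C2_len (x : C2idx mono piv) : len (tag (val x.1)) = 1%N.
Proof. by have := valP x.1; rewrite /inZ => /eqP. Qed.

Definition coefN (c : UIdx mono B piv -> k) (g : Arrow len) : k :=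
  \sum_(x : C1idx mono) c (inl (inl (inl x))) * (g == val x)%:R
  + \sum_(x : C3idx mono) c (inl (inr x)) *
        ((g == val x)%:R - ((tag g == tag (val x)) && (val (tagged g) == 0%N))%:R)
  + \sum_(x : C4idx mono B) c (inr x) * ((tag g \in val x) && (val (tagged g) == 0%N))%:R.

Lemma sumU_nonZ (c : UIdx mono B piv -> k) g : (1 < len (tag g))%N ->
  \sum_u c u *: U u g = coefN c g *: pv k (arrowseg g).
Proof.
move=> hl; rewrite sumU_split /coefN !scalerDl !scaler_suml.
rewrite [X in _ + X + _ + _ = _]big1 ?addr0; last first.
  move=> x _; rewrite /= arrcochE; case: eqP => [e|]; last by rewrite scaler0.
  by move: hl; rewrite e C2_len.
congr (_ + _ + _); apply: eq_bigr => x _ /=.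
- rewrite arrcochE; case: eqP => [->|_]; first by rewrite mulr1.
  by rewrite mulr0 scaler0 scale0r.
- rewrite arrcochE firstarrE mulrBr scalerBl scalerBr; congr (_ - _).
    by case: eqP => [->|_]; [rewrite mulr1 | rewrite mulr0 scaler0 scale0r].
  rewrite inE; case: ifP => _; first by rewrite mulr1.
  by rewrite mulr0 scaler0 scale0r.
- rewrite firstarrE; case: ifP => _; first by rewrite mulr1.
  by rewrite mulr0 scaler0 scale0r.
Qed.


Lemma lenne_tag (a : Arrow len) j : len (tag a) = 1%N -> (1 < len j)%N -> tag a != j.
Proof. by move=> h1 h2; apply/eqP => e; move: h2; rewrite -e h1. Qed.

Lemma lenne (a b : Arrow len) : len (tag a) = 1%N -> (1 < len (tag b))%N -> a != b.
Proof. by move=> h1 h2; apply/eqP => e; move: (lenne_tag h1 h2); rewrite e eqxx. Qed.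

Lemma sumU_Z (c : UIdx mono B piv -> k) g : len (tag g) = 1%N ->
  \sum_u c u *: U u g = \sum_(x : C2idx mono piv)
      (c (inl (inl (inr x))) * (g == val x.1)%:R) *: pv k (branch len (val x.2)).
Proof.
move=> hl; rewrite sumU_split.
rewrite [X in X + _ + _ + _]big1 ?add0r; last first.
  move=> x _; rewrite /= arrcochE.
  by rewrite (negbTE (lenne hl (hasMono_len (valP x)))) scaler0.
rewrite [X in _ + X + _]big1 ?addr0; last first.
  move=> x _; rewrite /= arrcochE firstarrE inE.
  have /and3P[_ h2 _] := valP x.
  by rewrite (negbTE (lenne hl h2)) (negbTE (lenne_tag hl h2)) /= subrr scaler0.
rewrite [X in _ + X]big1 ?addr0; last first.
  move=> x _; rewrite /= firstarrE; case: ifP => [/andP[h _]|_]; last by rewrite scaler0.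
  by have := lenne_tag hl (qv_len (comp_qv (valP x) h)); rewrite eqxx.
apply: eq_bigr => x _ /=; rewrite arrcochE.
by case: (_ == _); rewrite ?mulr1 ?mulr0 ?scaler0 ?scale0r.
Qed.

Lemma sbf_zero_inI l (f : Arrow len -> kQ k len) : (forall j, B l j != 0 -> sbf f j = 0) ->
  inI mono B (\sum_j (B l j * sbf f j) *: pv k (branch len j)).
Proof.
move=> h; rewrite big1; first exact: inI0.
move=> j _; have [z|nz] := eqVneq (B l j) 0; first by rewrite z mul0r scale0r.
by rewrite h // mulr0 scale0r.
Qed.

Lemma lamf_arr (a b : Arrow len) : arrcoch a (pv k (arrowseg a)) b (arrowseg b) = (b == a)%:R.
Proof.
rewrite arrcochE; have [->|ne] := eqVneq b a; first by rewrite pvE eqxx.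
by rewrite zero_kQ.
Qed.

Lemma lamf_first (K : pred 'I_n) (b : Arrow len) :
  firstarr k K b (arrowseg b) = ((tag b \in K) && (val (tagged b) == 0%N))%:R.
Proof. by rewrite firstarrE; case: ifP => _; rewrite ?pvE ?eqxx ?zero_kQ. Qed.

Lemma diag_cochain (f : Arrow len -> kQ k len) :
  (forall g, exists c, f g = c *: pv k (arrowseg g)) -> is_cochain f.
Proof.
move=> h g s; have [c ->] := h g; rewrite scaleE pvE.
have [->|ne] := eqVneq s (arrowseg g); last by rewrite mulr0 eqxx.
by move=> _; split => //; rewrite /valid arrowseg_a arrowseg_b ltnSn.
Qed.

Lemma sum_tagged_eq (a : Arrow len) j :
  \sum_(t : 'I_(len j)) ((@Tagged 'I_n j (arrT len) t == a)%:R : k) = (j == tag a)%:R.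
Proof.
case: a => i t0 /=; have [e|ne] := eqVneq j i.
  subst j; rewrite (bigD1 t0) //= big1 ?addr0; first by rewrite eqxx.
  by move=> t ne; rewrite eq_Tagged /= (negbTE ne).
rewrite big1 // => t _; case: eqP => // e.
have /= eji := congr1 (@tag _ _) e.
by rewrite eji eqxx in ne.
Qed.

Lemma sum_first0 j (b : bool) :
  \sum_(t : 'I_(len j)) ((b && (val t == 0%N))%:R : k) = b%:R.
Proof.
case: b => /=; last by rewrite big1.
rewrite (bigD1 (Ordinal (hlen j))) //= ?eqxx big1 ?addr0 // => t ne.
case: (val t =P 0%N) => // e.
by move: ne; rewrite (_ : t = Ordinal (hlen j)) ?eqxx //; apply: val_inj.
Qed.

Lemma monone (a b : Arrow len) : hasMono mono (tag a) -> ~~ hasMono mono (tag b) -> b != a.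
Proof. by move=> h1 h2; apply/eqP => e; move: h2; rewrite e h1. Qed.

Lemma U1_ker (x : C1idx mono) : inKerD1 mono B (U (inl (inl (inl x)) : UIdx mono B piv)).
Proof.
apply: kerD1.
  apply: diag_cochain => g; exists (g == val x)%:R; rewrite /= arrcochE.
  by case: eqP => [->|_]; rewrite ?scale1r ?scale0r.
move=> l; apply: sbf_zero_inI => j hB; apply: big1 => t _.
rewrite /lamf /= lamf_arr.
by rewrite (negbTE (monone (b := @Tagged 'I_n j (arrT len) t) (valP x) (hrho hB))).
Qed.

Lemma lenne2 (a b : Arrow len) : len (tag a) = 1%N -> (1 < len (tag b))%N -> b != a.
Proof. by move=> h1 h2; rewrite eq_sym lenne. Qed.

Lemma U2_ker (x : C2idx mono piv) : inKerD1 mono B (U (inl (inl (inr x)) : UIdx mono B piv)).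
Proof.
apply: kerD1.
  move=> g s; rewrite /= arrcochE.
  have [e|ne] := eqVneq g (val x.1); last by rewrite zero_kQ eqxx.
  rewrite pvE; have [es|ns] := eqVneq s (branch len (val x.2)); last by rewrite eqxx.
  move=> _; subst s g; split.
  - by rewrite /valid /branch mkseg_a ?mkseg_b //; apply: hlen.
  - by rewrite /src /branch mkseg_a // arrowseg_a Z_tagged0 ?C2_len.
  - rewrite /tgt /branch mkseg_b // vertl arrowseg_b Z_tagged0 ?C2_len //.
    by rewrite /vert C2_len.
move=> l; apply: sbf_zero_inI => j hB; apply: big1 => t _.
rewrite /lamf /= arrcochE.
by rewrite (negbTE (lenne2 (a := val x.1) (b := @Tagged 'I_n j (arrT len) t) (C2_len x) (B_len hB))) zero_kQ.
Qed.

Lemma sum_first0E j i :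
  \sum_(t : 'I_(len j)) ((((tag (@Tagged 'I_n j (arrT len) t) == i) &&
      (val (tagged (@Tagged 'I_n j (arrT len) t)) == 0%N))%:R : k)) = (j == i)%:R.
Proof. exact: sum_first0. Qed.

Lemma sum_first0K j (K : {set 'I_n}) :
  \sum_(t : 'I_(len j)) ((((tag (@Tagged 'I_n j (arrT len) t) \in K) &&
      (val (tagged (@Tagged 'I_n j (arrT len) t)) == 0%N))%:R : k)) = (j \in K)%:R.
Proof. by rewrite -(sum_first0 j (j \in K)); apply: eq_bigr. Qed.

Lemma lamU3 (x : C3idx mono) b : lamf (U (inl (inr x) : UIdx mono B piv)) b =
  (b == val x)%:R - ((tag b == tag (val x)) && (val (tagged b) == 0%N))%:R.
Proof.
rewrite /lamf /= sub_kQ; congr (_ - _); first exact: lamf_arr.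
exact: lamf_first.
Qed.

Lemma lamU4 (K : C4idx mono B) b : lamf (U (inr K : UIdx mono B piv)) b =
  ((tag b \in val K) && (val (tagged b) == 0%N))%:R.
Proof. by rewrite /lamf lamf_first. Qed.

Lemma U3_ker (x : C3idx mono) : inKerD1 mono B (U (inl (inr x) : UIdx mono B piv)).
Proof.
apply: kerD1.
  apply: diag_cochain => g.
  exists ((g == val x)%:R - ((tag g == tag (val x)) && (val (tagged g) == 0%N))%:R).
  rewrite /= arrcochE firstarrE inE scalerBl; congr (_ - _).
    by case: eqP => [->|_]; rewrite ?scale1r ?scale0r.
  by case: ifP => _; rewrite ?scale1r ?scale0r.
move=> l; apply: sbf_zero_inI => j _.
rewrite /sbf.
under eq_bigr => t _ do rewrite lamU3.
by rewrite sumrB sum_tagged_eq sum_first0E subrr.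
Qed.

Lemma U4_ker (K : C4idx mono B) : inKerD1 mono B (U (inr K : UIdx mono B piv)).
Proof.
apply: kerD1.
  apply: diag_cochain => g.
  exists ((tag g \in val K) && (val (tagged g) == 0%N))%:R.
  by rewrite /= firstarrE; case: ifP => _; rewrite ?scale1r ?scale0r.
move=> l.
have sbK : forall j, sbf (U (inr K : UIdx mono B piv)) j = (j \in val K)%:R.
  move=> j; rewrite /sbf.
  under eq_bigr => t _ do rewrite lamU4.
  exact: sum_first0K.
have [j0 /andP[hj0 inj0]|none] := pickP (fun j => (B l j != 0) && (j \in val K)).
  suff -> : \sum_j (B l j * sbf (U (inr K : UIdx mono B piv)) j) *: pv k (branch len j)
           = rho len B l by apply: inI_rho.
  apply: eq_bigr => j _; rewrite sbK.
  have [z|nz] := eqVneq (B l j) 0; first by rewrite z mul0r.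
  suff -> : j \in val K by rewrite mulr1.
  apply: (comp_closed (valP K) inj0); apply: connect1.
  rewrite /qedge /qv (B_len hj0) (B_len nz) (hrho hj0) (hrho nz) /=.
  by apply/existsP; exists l; rewrite hj0 nz.
rewrite big1; first exact: inI0.
move=> j _; rewrite sbK; have := none j; rewrite /=.
have [z|nz] := eqVneq (B l j) 0; first by rewrite z mul0r scale0r.
by move=> /= ->; rewrite mulr0 scale0r.
Qed.

Lemma U_ker (u : UIdx mono B piv) : inKerD1 mono B (U u).
Proof.
case: u => [[[x|x]|x]|x].
- exact: U1_ker.
- exact: U2_ker.
- exact: U3_ker.
- exact: U4_ker.
Qed.

Lemma piv_col l' l : B l' (piv l) = (l' == l)%:R.
Proof.
case: hrref => _ h1 _ h4; have [->|ne] := eqVneq l' l; first by rewrite h1.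
exact: h4.
Qed.

Lemma sum_piv (d : 'I_p -> k) l : \sum_l' d l' * B l' (piv l) = d l.
Proof.
rewrite (bigD1 l) //= piv_col eqxx mulr1 big1 ?addr0 // => l' ne.
by rewrite piv_col (negbTE ne) mulr0.
Qed.

Lemma piv_nomono l : ~~ hasMono mono (piv l).
Proof. by apply: (hrho (l := l)); rewrite piv_col eqxx oner_eq0. Qed.

Lemma slen_arrowseg (g : Arrow len) : slen (arrowseg g) = 1%N.
Proof. by rewrite /slen arrowseg_a arrowseg_b subSn // subnn. Qed.

Lemma coefN_zero (c : UIdx mono B piv -> k) g :
  (forall g, inI mono B (\sum_u c u *: U u g)) -> (1 < len (tag g))%N -> coefN c g = 0.
Proof.
move=> hc hl; have h := hc g; rewrite sumU_nonZ // in h.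
apply/eqP; apply: contraT => nz.
have := hadm h (s := arrowseg g).
rewrite scaleE pvE eqxx mulr1 => /(_ nz).
by rewrite slen_arrowseg.
Qed.

Lemma C3P (x : C3idx mono) :
  [/\ val (tagged (val x)) != 0%N, (1 < len (tag (val x)))%N & ~~ hasMono mono (tag (val x))].
Proof. exact/and3P/(valP x). Qed.

Lemma indep_C1 (c : UIdx mono B piv -> k) :
  (forall g, inI mono B (\sum_u c u *: U u g)) -> forall x, c (inl (inl (inl x))) = 0.
Proof.
move=> hc x; have := coefN_zero hc (hasMono_len (valP x)); rewrite /coefN.
rewrite (bigD1 x) //= eqxx mulr1 big1 ?addr0; last first.
  by move=> x' ne; rewrite (inj_eq val_inj) eq_sym (negbTE ne) mulr0.
rewrite big1 ?addr0; last first.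
  move=> x' _; have [_ _ nm] := C3P x'.
  rewrite eq_sym (negbTE (monone (valP x) nm)).
  suff -> : (tag (val x) == tag (val x')) = false by rewrite subrr mulr0.
  by apply/negbTE; apply: contraNneq nm => <-; exact: (valP x).
rewrite big1 ?addr0 // => K _.
suff /negbTE -> : tag (val x) \notin val K by rewrite mulr0.
by apply/negP => hK; have := comp_qv (valP K) hK; rewrite /qv (valP x) andbF.
Qed.

Lemma indep_C3 (c : UIdx mono B piv -> k) :
  (forall g, inI mono B (\sum_u c u *: U u g)) -> forall x, c (inl (inr x)) = 0.
Proof.
move=> hc x; have [t0 hl nm] := C3P x.
have := coefN_zero hc hl; rewrite /coefN.
rewrite big1 ?add0r; last first.
  by move=> x' _; rewrite (negbTE (monone (valP x') nm)) mulr0.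
rewrite (bigD1 x) //= eqxx (negbTE t0) andbF subr0 mulr1 big1 ?addr0; last first.
  by move=> x' ne; rewrite (inj_eq val_inj) eq_sym (negbTE ne) ?(negbTE t0) ?andbF subrr mulr0.
by rewrite big1 ?addr0 // => K _; rewrite ?(negbTE t0) ?andbF mulr0.
Qed.

Lemma comp_rep (K : C4idx mono B) : exists i, [/\ qv mono i, i \in val K & val K = compof i].
Proof.
have := valP K; case/imsetP => i; rewrite inE => hi e.
by exists i; split => //; rewrite e ?compof_self.
Qed.

Lemma indep_C4 (c : UIdx mono B piv -> k) :
  (forall g, inI mono B (\sum_u c u *: U u g)) -> forall K, c (inr K) = 0.
Proof.
move=> hc K; have [i [hi iK _]] := comp_rep K.
pose g := @Tagged 'I_n i (arrT len) (Ordinal (hlen i)).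
have := coefN_zero (g := g) hc (qv_len hi); rewrite /coefN.
have nm : ~~ hasMono mono (tag g) by case/andP: hi.
rewrite big1 ?add0r; last first.
  by move=> x' _; rewrite (negbTE (monone (valP x') nm)) mulr0.
rewrite big1 ?add0r; last by move=> x' _; rewrite (indep_C3 hc) mul0r.
rewrite (bigD1 K) //= iK eqxx mulr1 big1 ?addr0 // => K' ne.
suff /negbTE -> : i \notin val K' by rewrite mulr0.
apply/negP => iK'; move: ne; rewrite (_ : K' = K) ?eqxx //.
apply: val_inj; exact: (comp_uniq (valP K') (valP K) iK' iK).
Qed.

Lemma C2eval (c : UIdx mono B piv -> k) z j' :
  (\sum_(x : C2idx mono piv) (c (inl (inl (inr x))) * (z == val x.1)%:R) *: pv k (branch len (val x.2)))
     (branch len j')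
  = \sum_(x : C2idx mono piv) c (inl (inl (inr x))) * ((z == val x.1) && (j' == val x.2))%:R.
Proof.
rewrite sum_ffunE; apply: eq_bigr => x _.
by rewrite scaleE pvE (inj_eq (@branch_inj)) -mulrA -natrM mulnb.
Qed.

Lemma C2P (x : C2idx mono piv) : ~~ hasMono mono (val x.2) /\ forall l, piv l != val x.2.
Proof. by have /andP[h1 /forallP h2] := valP x.2. Qed.

Lemma C2_inj (x x' : C2idx mono piv) : val x.1 = val x'.1 -> val x.2 = val x'.2 -> x = x'.
Proof. by case: x x' => [a1 a2] [b1 b2] /= e1 e2; rewrite (val_inj e1) (val_inj e2). Qed.

Lemma indep_C2 (c : UIdx mono B piv -> k) :
  (forall g, inI mono B (\sum_u c u *: U u g)) -> forall x, c (inl (inl (inr x))) = 0.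
Proof.
move=> hc x; have h := hc (val x.1); rewrite (sumU_Z c (C2_len x)) in h.
have [d hd] := ideal_branch h.
have dz : forall l, d l = 0.
  move=> l; have := hd (piv l) (piv_nomono l); rewrite sum_piv C2eval big1 //.
  move=> x' _; have [_ h2] := C2P x'; by rewrite (negbTE (h2 l)) andbF mulr0.
have [nm _] := C2P x.
have := hd (val x.2) nm; rewrite C2eval [RHS]big1; last by move=> l _; rewrite dz mul0r.
rewrite (bigD1 x) //= !eqxx mulr1 big1 ?addr0 // => x' ne.
case: (val x.1 =P val x'.1) => [e1|]; last by rewrite mulr0.
case: (val x.2 =P val x'.2) => [e2|]; last by rewrite mulr0.
by move: ne; rewrite (C2_inj e1 e2) eqxx.
Qed.

Lemma indep (c : UIdx mono B piv -> k) :
  (forall g, inI mono B (\sum_u c u *: U u g)) -> forall u, c u = 0.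
Proof.
move=> hc [[[x|x]|x]|x].
- exact: (indep_C1 hc).
- exact: (indep_C2 hc).
- exact: (indep_C3 hc).
- exact: (indep_C4 hc).
Qed.

Lemma big_arrow (G : Arrow len -> k) :
  \sum_(a : Arrow len) G a = \sum_(i : 'I_n) \sum_(t : 'I_(len i)) G (@Tagged 'I_n i (arrT len) t).
Proof.
rewrite (@sig_big_dep _ _ _ 'I_n (fun i => 'I_(len i)) xpredT (fun _ => xpredT) (fun i t => G (@Tagged 'I_n i (arrT len) t))) /=.
by apply: eq_bigr => -[i t].
Qed.

Lemma big_sigE (P : pred (Arrow len)) (F : Arrow len -> k) :
  \sum_(x : {a | P a}) F (val x) = \sum_(a | P a) F a.
Proof.
symmetry; rewrite (reindex_omap (val : {a | P a} -> Arrow len) insub); last first.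
  by move=> i Pi; rewrite insubT.
by apply: eq_bigl => -[i Pi] /=; rewrite insubT ?Pi /=; apply/eqP.
Qed.

Lemma C3sum (F : Arrow len -> k) i : (1 < len i)%N -> ~~ hasMono mono i ->
  \sum_(x : C3idx mono) (tag (val x) == i)%:R * F (val x)
  = \sum_(t : 'I_(len i)) (val t != 0%N)%:R * F (@Tagged 'I_n i (arrT len) t).
Proof.
move=> hl nm.
rewrite (big_sigE _ (fun a => (tag a == i)%:R * F a)) big_mkcond big_arrow.
rewrite (bigD1 i) //= [X in _ + X]big1 ?addr0; last first.
  move=> i' ne; apply: big1 => t _; case: ifP => // _.
  by rewrite /= (negbTE ne) mul0r.
apply: eq_bigr => t _ /=; rewrite eqxx mul1r hl nm !andbT.
by case: (val t != 0%N); rewrite ?mul1r ?mul0r.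
Qed.

Lemma sb_decomp f i (t0 : 'I_(len i)) : val t0 = 0%N ->
  sbf f i = lamf f (@Tagged 'I_n i (arrT len) t0)
     + \sum_(t : 'I_(len i)) (val t != 0%N)%:R * lamf f (@Tagged 'I_n i (arrT len) t).
Proof.
move=> h0; rewrite /sbf (bigD1 t0) //=; congr (_ + _).
rewrite [LHS]big_mkcond /=; apply: eq_bigr => t _.
have -> : (val t != 0%N) = (t != t0) by rewrite -h0 (inj_eq val_inj).
by case: (t != t0); rewrite ?mul1r ?mul0r.
Qed.

Lemma branch_eval (a : 'I_n -> k) j' :
  (\sum_j a j *: pv k (branch len j)) (branch len j') = a j'.
Proof.
rewrite sum_ffunE (bigD1 j') //= big1 ?addr0.
  by rewrite scaleE pvE eqxx mulr1.
by move=> j ne; rewrite scaleE pvE (inj_eq (@branch_inj)) eq_sym (negbTE ne) mulr0.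
Qed.

Lemma rowc f : inKerD1 mono B f -> forall l j, B l j != 0 -> sbf f j = sbf f (piv l).
Proof.
move=> [hf hk] l j hB.
have := hk (inr l) isT; rewrite D1_rho // => h.
have [d hd] := ideal_branch h.
have dl : forall l', d l' = B l (piv l') * sbf f (piv l').
  by move=> l'; have := hd (piv l') (piv_nomono l'); rewrite branch_eval sum_piv => ->.
have := hd j (hrho hB); rewrite branch_eval.
under eq_bigr => l' _ do rewrite dl piv_col.
rewrite (bigD1 l) //= eqxx mul1r big1 ?addr0; last first.
  by move=> l' ne; rewrite eq_sym (negbTE ne) mul0r mul0r.
by rewrite mulrC; move/(mulIf hB).
Qed.

Lemma sb_conn f : inKerD1 mono B f -> forall i j,
  connect (qedge mono B) i j -> sbf f i = sbf f j.
Proof.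
move=> hf i j; apply: connect_const => x y /and3P[_ _ /existsP[l /andP[h1 h2]]].
by rewrite (rowc hf h1) (rowc hf h2).
Qed.

Definition cspan (f : Arrow len -> kQ k len) (u : UIdx mono B piv) : k :=
  match u with
  | inl (inl (inl x)) => lamf f (val x)
  | inl (inl (inr x)) => f (val x.1) (branch len (val x.2))
        - \sum_l f (val x.1) (branch len (piv l)) * B l (val x.2)
  | inl (inr x) => lamf f (val x)
  | inr K => if [pick i in val K] is Some i then sbf f i else 0
  end.

Lemma cspan_K f (K : C4idx mono B) i : inKerD1 mono B f -> i \in val K ->
  cspan f (inr K) = sbf f i.
Proof.
move=> hf iK; rewrite /=; case: pickP => [j jK|none]; last by have := none i; rewrite iK.
apply: sb_conn => //.
have jK' : j \in val K := jK.
have [i0 [_ _ e]] := comp_rep K; move: iK jK'; rewrite e !inE => c1 c2.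
rewrite csym in c2; exact: connect_trans c2 c1.
Qed.

Lemma sig_eqE (P : pred (Arrow len)) (x : {a | P a}) g (hg : P g) :
  (g == val x) = (exist P g hg == x).
Proof. by rewrite -(inj_eq val_inj). Qed.

Lemma monone2 (a b : Arrow len) : hasMono mono (tag a) -> ~~ hasMono mono (tag b) -> a != b.
Proof. by move=> h1 h2; rewrite eq_sym monone. Qed.

Lemma span_nonZ_mono f (g : Arrow len) : (1 < len (tag g))%N -> hasMono mono (tag g) ->
  coefN (cspan f) g = lamf f g.
Proof.
move=> hl hm; rewrite /coefN.
rewrite (bigD1 (exist _ g hm)) //= eqxx mulr1 big1 ?addr0; last first.
  by move=> x ne; rewrite (sig_eqE x hm) eq_sym (negbTE ne) mulr0.
rewrite big1 ?addr0; last first.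
  move=> x _; have [_ _ nmx] := C3P x.
  rewrite (negbTE (monone2 hm nmx)).
  suff -> : (tag g == tag (val x)) = false by rewrite subrr mulr0.
  by apply/negbTE; apply: contraNneq nmx => <-.
rewrite big1 ?addr0 // => K _.
suff /negbTE -> : tag g \notin val K by rewrite mulr0.
by apply/negP => hK; have := comp_qv (valP K) hK; rewrite /qv hm andbF.
Qed.

Lemma span_nonZ_pos f (g : Arrow len) : (1 < len (tag g))%N -> ~~ hasMono mono (tag g) ->
  val (tagged g) != 0%N -> coefN (cspan f) g = lamf f g.
Proof.
move=> hl nm tpos; rewrite /coefN.
rewrite big1 ?add0r; last first.
  by move=> x _; rewrite (negbTE (monone (valP x) nm)) mulr0.
have hg : [&& val (tagged g) != 0%N, (1 < len (tag g))%N & ~~ hasMono mono (tag g)].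
  by rewrite tpos hl nm.
rewrite (bigD1 (exist _ g hg)) //= eqxx (negbTE tpos) andbF subr0 mulr1.
rewrite big1 ?addr0; last first.
  by move=> x ne; rewrite (sig_eqE x hg) eq_sym (negbTE ne) ?(negbTE tpos) ?andbF subrr mulr0.
by rewrite big1 ?addr0 // => K _; rewrite ?(negbTE tpos) ?andbF mulr0.
Qed.

Lemma sum_compT (F : C4idx mono B -> k) (K0 : C4idx mono B) i : i \in val K0 ->
  \sum_(K : C4idx mono B) F K * ((i \in val K) && true)%:R = F K0.
Proof.
move=> hK0; rewrite (bigD1 K0) //= hK0 mulr1 big1 ?addr0 // => K ne.
suff /negbTE -> : i \notin val K by rewrite mulr0.
apply/negP => hK; move: ne; rewrite (_ : K = K0) ?eqxx //.
by apply: val_inj; exact: (comp_uniq (valP K) (valP K0) hK hK0).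
Qed.

Lemma span_nonZ_zero f (g : Arrow len) : inKerD1 mono B f -> qv mono (tag g) ->
  val (tagged g) = 0%N -> coefN (cspan f) g = lamf f g.
Proof.
move=> hf hq t0; have /andP[hl nm] := hq.
have eg : @Tagged 'I_n (tag g) (arrT len) (tagged g) = g by case: g {hq hl nm t0}.
rewrite /coefN big1 ?add0r; last first.
  by move=> x _; rewrite (negbTE (monone (valP x) nm)) mulr0.
have -> : \sum_(x : C3idx mono) cspan f (inl (inr x)) *
        ((g == val x)%:R - ((tag g == tag (val x)) && (val (tagged g) == 0%N))%:R)
      = - \sum_(x : C3idx mono) (tag (val x) == tag g)%:R * lamf f (val x).
  rewrite -sumrN; apply: eq_bigr => x _; have [tx _ _] := C3P x.
  have -> : (g == val x) = false.
    by apply/negbTE; apply: contra tx => /eqP <-; rewrite t0.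
  by rewrite t0 eqxx andbT eq_sym sub0r mulrN mulrC.
rewrite C3sum //.
pose K0 : C4idx mono B := exist _ (compof (tag g)) (compof_in hq).
have hK0 : tag g \in val K0 := compof_self _.
rewrite t0 eqxx (sum_compT _ hK0) (cspan_K (i := tag g) hf hK0).
rewrite (@sb_decomp f (tag g) (tagged g)) // eg.
by rewrite addrCA addNr addr0.
Qed.

Lemma span_nonZ f g : inKerD1 mono B f -> (1 < len (tag g))%N ->
  f g - \sum_u cspan f u *: U u g = 0.
Proof.
move=> hf hl; rewrite sumU_nonZ //.
have -> : coefN (cspan f) g = lamf f g.
  have [hm|nm] := boolP (hasMono mono (tag g)); first exact: span_nonZ_mono.
  have [t0|tpos] := eqVneq (val (tagged g)) 0%N; last exact: span_nonZ_pos.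
  by apply: span_nonZ_zero; rewrite // /qv hl nm.
by rewrite [f g](cochain_diag (a := g) hf.1 hl) subrr.
Qed.

Lemma C2_point_in (c : UIdx mono B piv -> k) g j0 (hz : inZ g) (hb : inB0w mono piv j0) :
  \sum_(x : C2idx mono piv) c (inl (inl (inr x))) * ((g == val x.1) && (j0 == val x.2))%:R
  = c (inl (inl (inr (exist _ g hz, exist _ j0 hb)))).
Proof.
rewrite (bigD1 (exist _ g hz, exist _ j0 hb)) //= !eqxx mulr1 big1 ?addr0 // => x ne.
case: (g =P val x.1) => [e1|]; last by rewrite mulr0.
case: (j0 =P val x.2) => [e2|]; last by rewrite mulr0.
by move: ne; rewrite (@C2_inj x (exist _ g hz, exist _ j0 hb)) ?eqxx.
Qed.

Lemma C2_point_out (c : UIdx mono B piv -> k) g j0 : ~~ inB0w mono piv j0 ->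
  \sum_(x : C2idx mono piv) c (inl (inl (inr x))) * ((g == val x.1) && (j0 == val x.2))%:R = 0.
Proof.
move=> nb; apply: big1 => x _.
case: (j0 =P val x.2) => [e|]; last by rewrite andbF mulr0.
by move: nb; rewrite e (valP x.2).
Qed.

Lemma not_branch (s : Seg len) j : s != branch len (tag s) -> (s == branch len j) = false.
Proof.
move=> ne; apply/negbTE; apply: contra ne => /eqP e.
by rewrite {1}e e.
Qed.

Lemma span_Z f g : inKerD1 mono B f -> len (tag g) = 1%N ->
  inI mono B (f g - \sum_u cspan f u *: U u g).
Proof.
move=> hf hl; rewrite sumU_Z //.
pose D j := f g (branch len j).
have E : f g - \sum_(x : C2idx mono piv)
      (cspan f (inl (inl (inr x))) * (g == val x.1)%:R) *: pv k (branch len (val x.2))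
    = \sum_l D (piv l) *: rho len B l + \sum_j ((hasMono mono j)%:R * D j) *: pv k (branch len j).
  apply/ffunP => s; rewrite sub_kQ add_kQ.
  have [e|ne] := eqVneq s (branch len (tag s)); last first.
    have fz : f g s = 0.
      by apply/eqP; apply: contraR ne => nz; apply/eqP; exact: (cochain_Z_supp hf.1 hl nz).
    rewrite fz !sum_ffunE !big1 ?subrr ?addr0 //.
    - by move=> j _; rewrite scaleE pvE not_branch // mulr0.
    - move=> l _; rewrite scaleE /rho sum_ffunE big1 ?mulr0 //.
      by move=> j _; rewrite scaleE pvE not_branch // mulr0.
    - by move=> x _; rewrite scaleE pvE not_branch // mulr0.
  have [j0 ->] : exists j0, s = branch len j0 by exists (tag s).
  rewrite C2eval branch_eval sum_ffunE.
  under [X in _ = X + _]eq_bigr => l _ do rewrite scaleE rho_branch.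
  have hz : inZ g by rewrite /inZ hl.
  have [hm|nm] := boolP (hasMono mono j0).
    rewrite C2_point_out; last by rewrite /inB0w hm.
    rewrite big1 ?add0r ?mul1r ?subr0 //.
    move=> l _; have [z|nz] := eqVneq (B l j0) 0; first by rewrite z mulr0.
    by have := hrho nz; rewrite hm.
  rewrite mul0r addr0.
  have [[l0 pl]|npiv] : (exists l0, piv l0 = j0) \/ (forall l, piv l != j0).
    case: (pickP (fun l => piv l == j0)) => [l0 /eqP h|h]; first by left; exists l0.
    by right => l; rewrite h.
    rewrite C2_point_out; last by rewrite /inB0w nm /=; apply/forallPn; exists l0; rewrite pl eqxx.
    by rewrite -pl sum_piv subr0.
  have hb : inB0w mono piv j0.
    by rewrite /inB0w nm /=; apply/forallP => l; rewrite npiv.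
  rewrite (C2_point_in _ hz hb) /=.
  by rewrite opprB addrCA subrr addr0.
rewrite E; apply: inID.
  by apply: inI_sum => l _; apply: inIZ; exact: inI_rho.
apply: inI_sum => j _; have [hm|nm] := boolP (hasMono mono j).
  by apply: inIZ; exact: inI_branch_mono.
by rewrite mul0r scale0r; exact: inI0.
Qed.

Lemma main_parts :
  [/\ forall u : UIdx mono B piv, inKerD1 mono B (U u),
      forall c : UIdx mono B piv -> k,
        (forall g : Arrow len, inI mono B (\sum_(u : UIdx mono B piv) c u *: U u g)) ->
        forall u, c u = 0
    & forall f : Arrow len -> kQ k len, inKerD1 mono B f ->
        exists c : UIdx mono B piv -> k,
          forall g : Arrow len,
            inI mono B (f g - \sum_(u : UIdx mono B piv) c u *: U u g)].
Proof.
split; first exact: U_ker.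
  exact: indep.
move=> f hf; exists (cspan f) => g.
have := hlen (tag g); rewrite leq_eqVlt => /orP[/eqP e|hl].
  by apply: span_Z.
by rewrite span_nonZ //; exact: inI0.
Qed.

End S.

Theorem lemma3p3
  (k : fieldType) (hchar : [pchar k] =i pred0)
  (n : nat) (len : 'I_n -> nat) (hn : (0 < n)%N) (hlen : forall i, (0 < len i)%N)
  (mono : {set Seg len}) (p : nat) (B : 'M[k]_(p, n)) (piv : 'I_p -> 'I_n)
  (hrref : is_rref B piv)
  (hrho : forall (l : 'I_p) (j : 'I_n), B l j != 0 -> ~~ hasMono mono j)
  (hadm : admissible mono B)
  (hmin : minimal_gen mono B) :
  [/\ (* U is contained in ker D_1 *)
      forall u : UIdx mono B piv, inKerD1 mono B (U u),
      (* U is linearly independent in Hom_{E^e}(kQ_1, A) *)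
      forall c : UIdx mono B piv -> k,
        (forall g : Arrow len, inI mono B (\sum_(u : UIdx mono B piv) c u *: U u g)) ->
        forall u, c u = 0
    & (* U spans ker D_1 *)
      forall f : Arrow len -> kQ k len, inKerD1 mono B f ->
        exists c : UIdx mono B piv -> k,
          forall g : Arrow len,
            inI mono B (f g - \sum_(u : UIdx mono B piv) c u *: U u g)].
Proof.
exact: (main_parts hlen hadm hrref hrho).
Qed.
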